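(* For every $n\ge4$, $\operatorname{sdim}(K_{n-3}+\epsilon_3)=n-1$.
   Context: $\epsilon_3$ is the graph with three vertices and no edges; $K_{n-3}+\epsilon_3$ is obtained from disjoint copies of $K_{n-3}$ and $\epsilon_3$ by adding all edges between them. A unit-distance embedding of a graph $G$ in $\mathbb{R}^n$ is an injective map $f$ from the vertex set of $G$ to $\mathbb{R}^n$ such that $|f(u)-f(v)|=1$ for every edge $uv$ and no point $f(w)$ lies on the segment $[f(u),f(v)]$ for an edge $uv$ with $w\notin\{u,v\}$. $G$ admits a spherical embedding of dimension $k$ and radius $r$ if $G$ has a unit-distance embedding in $\mathbb{R}^k$ all of whose vertices lie on a sphere $\{x\in\mathbb{R}^k:|x-c|=r\}$. $\operatorname{sdim}G$ is the least $k$ such that $G$ admits a spherical embedding of dimension $k$ and some radius $r<1$. *)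

(* Defs.v *)
From HB Require Import structures.
From mathcomp Require Import all_boot all_order all_algebra.
From mathcomp Require Import reals.
Set Implicit Arguments. Unset Strict Implicit. Unset Printing Implicit Defensive.
Import Order.TTheory GRing.Theory Num.Theory.
Local Open Scope ring_scope.

Definition edist (R : realType) (k : nat) (x y : 'rV[R]_k) : R :=
  Num.sqrt (\sum_(i < k) (x ord0 i - y ord0 i) ^+ 2).

Definition on_segment (R : realType) (k : nat) (p a b : 'rV[R]_k) : Prop :=
  exists t : R, 0 <= t /\ t <= 1 /\ p = (1 - t) *: a + t *: b.

(* A graph is an (irreflexive, symmetric) edge relation on a finite vertex type. *)
Definition complete_rel (T : finType) : rel T := fun x y => x != y.
Definition empty_rel (T : finType) : rel T := fun _ _ => false.

Definition join_rel (A B : finType) (ea : rel A) (eb : rel B) : rel (sum A B) :=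
  fun x y => match x, y with
             | inl a, inl a' => ea a a'
             | inr b, inr b' => eb b b'
             | _, _ => true
             end.

Definition K_plus_eps3 (m : nat) : rel (sum (ordinal m) (ordinal 3)) :=
  join_rel (@complete_rel 'I_m) (@empty_rel 'I_3).
Arguments K_plus_eps3 m : clear implicits.

Definition unit_distance_embedding (R : realType) (V : finType) (e : rel V)
    (k : nat) (f : V -> 'rV[R]_k) : Prop :=
  injective f /\
  (forall u v, e u v -> edist (f u) (f v) = 1) /\
  (forall u v w, e u v -> w != u -> w != v -> ~ on_segment (f w) (f u) (f v)).

Definition spherical_embedding (R : realType) (V : finType) (e : rel V)
    (k : nat) (r : R) : Prop :=
  exists f : V -> 'rV[R]_k, unit_distance_embedding e f /\
    exists c : 'rV[R]_k, forall v, edist (f v) c = r.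

Definition sph_lt1 (R : realType) (V : finType) (e : rel V) (k : nat) : Prop :=
  exists r : R, r < 1 /\ spherical_embedding e k r.

Definition is_sdim (R : realType) (V : finType) (e : rel V) (k : nat) : Prop :=
  sph_lt1 R e k /\ forall j : nat, (j < k)%N -> ~ sph_lt1 R e j.

(* Main.v *)
Require Import Defs.
From HB Require Import structures.
From mathcomp Require Import all_boot all_order all_algebra.
From mathcomp Require Import reals.
From mathcomp Require Import ring lra zify.
Set Implicit Arguments. Unset Strict Implicit. Unset Printing Implicit Defensive.
Import Order.TTheory GRing.Theory Num.Theory.
Local Open Scope ring_scope.


Definition dot (R : realType) (k : nat) (u v : 'rV[R]_k) : R := \sum_i u ord0 i * v ord0 i.

Lemma dotC (R : realType) (k : nat) (u : 'rV[R]_k) (v : 'rV[R]_k) : dot u v = dot v u.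
Proof. by apply: eq_bigr => i _; rewrite mulrC. Qed.
Lemma dotDl (R : realType) (k : nat) (u : 'rV[R]_k) (v : 'rV[R]_k) (w : 'rV[R]_k) : dot (u + v) w = dot u w + dot v w.
Proof. by rewrite /dot -big_split; apply: eq_bigr => i _; rewrite !mxE mulrDl. Qed.
Lemma dotZl (R : realType) (k : nat) (a : R) (u : 'rV[R]_k) (w : 'rV[R]_k) : dot (a *: u) w = a * dot u w.
Proof. by rewrite /dot mulr_sumr; apply: eq_bigr => i _; rewrite !mxE mulrA. Qed.
Lemma dotNl (R : realType) (k : nat) (u : 'rV[R]_k) (w : 'rV[R]_k) : dot (- u) w = - dot u w.
Proof. by rewrite -scaleN1r dotZl mulN1r. Qed.
Lemma dotBl (R : realType) (k : nat) (u : 'rV[R]_k) (v : 'rV[R]_k) (w : 'rV[R]_k) : dot (u - v) w = dot u w - dot v w.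
Proof. by rewrite dotDl dotNl. Qed.
Lemma dot0l (R : realType) (k : nat) (w : 'rV[R]_k) : dot 0 w = 0.
Proof. by rewrite /dot big1 // => i _; rewrite mxE mul0r. Qed.
Lemma dotDr (R : realType) (k : nat) (u : 'rV[R]_k) (v : 'rV[R]_k) (w : 'rV[R]_k) : dot w (u + v) = dot w u + dot w v.
Proof. by rewrite dotC dotDl !(dotC w). Qed.
Lemma dotBr (R : realType) (k : nat) (u : 'rV[R]_k) (v : 'rV[R]_k) (w : 'rV[R]_k) : dot w (u - v) = dot w u - dot w v.
Proof. by rewrite dotC dotBl !(dotC w). Qed.
Lemma dotZr (R : realType) (k : nat) (a : R) (u : 'rV[R]_k) (w : 'rV[R]_k) : dot w (a *: u) = a * dot w u.
Proof. by rewrite dotC dotZl dotC. Qed.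
Lemma dot0r (R : realType) (k : nat) (w : 'rV[R]_k) : dot w 0 = 0.
Proof. by rewrite dotC dot0l. Qed.
Lemma dot_suml (R : realType) (k : nat) (I : finType) (F : I -> 'rV[R]_k) w :
  dot (\sum_i F i) w = \sum_i dot (F i) w.
Proof.
elim/big_rec2: _ => [|i y1 y2 _ <-]; [exact: dot0l | exact: dotDl].
Qed.
Lemma dot_ge0 (R : realType) (k : nat) (u : 'rV[R]_k) : 0 <= dot u u.
Proof. by apply: sumr_ge0 => i _; rewrite -expr2 sqr_ge0. Qed.
Lemma dot_eq0 (R : realType) (k : nat) (u : 'rV[R]_k) : dot u u = 0 -> u = 0.
Proof.
move=> H0; apply/rowP => i; rewrite mxE.
have H1 : \sum_(j | xpredT j) u ord0 j ^+ 2 = 0.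
  by rewrite -[RHS]H0 /dot; apply: eq_bigr => j _; rewrite expr2.
have := @psumr_eq0P _ _ xpredT (fun j => u ord0 j ^+ 2) (fun j _ => sqr_ge0 _) H1 i isT.
by move/eqP; rewrite expr2 mulf_eq0 orbb => /eqP.
Qed.
Lemma dot_gt0 (R : realType) (k : nat) (u : 'rV[R]_k) : u != 0 -> 0 < dot u u.
Proof.
move=> nz; rewrite lt_neqAle dot_ge0 andbT eq_sym; apply/eqP => /dot_eq0 h.
by rewrite h eqxx in nz.
Qed.
Lemma edistE (R : realType) (k : nat) (u : 'rV[R]_k) (v : 'rV[R]_k) : edist u v = Num.sqrt (dot (u - v) (u - v)).
Proof. by rewrite /edist; congr Num.sqrt; apply: eq_bigr => i _; rewrite !mxE expr2. Qed.
Lemma edist_sq (R : realType) (k : nat) (u : 'rV[R]_k) (v : 'rV[R]_k) (r : R) : edist u v = r -> dot (u - v) (u - v) = r ^+ 2.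
Proof. by rewrite edistE => <-; rewrite sqr_sqrtr // dot_ge0. Qed.
Lemma dot_delta (R : realType) (k : nat) (p q : 'I_k) :
  dot (delta_mx 0 p : 'rV[R]_k) (delta_mx 0 q) = (p == q)%:R.
Proof.
rewrite /dot (bigD1 p) //= big1 => [|i ip]; rewrite !mxE ?eqxx /=.
  by rewrite mul1r addr0 eq_sym.
by rewrite (negbTE ip) mul0r.
Qed.

Lemma dot_sub_expand (R : realType) k (u v : 'rV[R]_k) :
  dot (u - v) (u - v) = dot u u + dot v v - 2 * dot u v.
Proof. rewrite dotBl !dotBr (dotC v u); ring. Qed.

Lemma sphere_seg (R : realType) k (p a b c : 'rV[R]_k) s :
  dot (a - c) (a - c) = s -> dot (b - c) (b - c) = s -> dot (p - c) (p - c) = s ->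
  on_segment p a b -> p = a \/ p = b.
Proof.
move=> Ha Hb Hp [t [t0 [t1 Ep]]]; rewrite Ep in Hp *.
have [A EA] : {A | A = a - c} by exists (a - c).
have [B EB] : {B | B = b - c} by exists (b - c).
have E : (1 - t) *: a + t *: b - c = (1 - t) *: A + t *: B.
  have Ec : c = (1 - t) *: c + t *: c by rewrite -scalerDl subrK scale1r.
  by rewrite EA EB !scalerBr {1}Ec opprD addrACA.
rewrite -EA in Ha; rewrite -EB in Hb.
move: Hp; rewrite E !(dotDl, dotDr, dotZl, dotZr) (dotC B A) Ha Hb => Hp.
have : 2 * t * (1 - t) * (dot A B - s) = 0.
  have -> : 2 * t * (1 - t) * (dot A B - s) = ((1 - t) * ((1 - t) * s) + t * ((1 - t) * dot A B) +
    t * ((1 - t) * dot A B + t * s)) - s by ring.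
  by rewrite Hp subrr.
move/eqP; rewrite !mulf_eq0 pnatr_eq0 /= !subr_eq0 => /orP [/orP [/eqP t0'| /eqP t1'] | /eqP AB].
- by left; rewrite t0' subr0 scale1r scale0r addr0.
- by right; rewrite -t1' subrr scale0r add0r scale1r.
have : dot (A - B) (A - B) = 0 by rewrite dot_sub_expand Ha Hb AB; ring.
move/dot_eq0/eqP; rewrite EA EB opprB addrA subrK subr_eq0 => /eqP ->.
by left; rewrite -scalerDl subrK scale1r.
Qed.

Definition iota_v m (v : 'I_m + 'I_3) : 'I_(m + 2) :=
  match v with
  | inl i => lshift 2 i
  | inr k => rshift m (if (k == 2 :> nat) then @ord_max 1 else ord0)
  end.
Definition sig_v (R : realType) (h : R) m (v : 'I_m + 'I_3) : R :=
  match v with inl _ => h | inr k => if (k == 1 :> nat) then - h else h end.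

Lemma upper (R : realType) m : sph_lt1 R (K_plus_eps3 m) (m + 2).
Proof.
have [h Hh] : {h : R | h = Num.sqrt (2^-1)} by eexists.
have h2 : h ^+ 2 = 2^-1 by rewrite Hh sqr_sqrtr // invr_ge0 ler0n.
have hgt0 : 0 < h by rewrite Hh sqrtr_gt0 invr_gt0 ltr0n.
have hlt1 : h < 1 by nra.
have sig2 : forall v : 'I_m + 'I_3, sig_v h v ^+ 2 = 2^-1.
  case=> [i|k] /=; first exact: h2.
  by case: ifP => _; rewrite ?sqrrN h2.
have signe : forall v : 'I_m + 'I_3, sig_v h v != 0.
  case=> [i|k] /=; first by rewrite gt_eqF.
  by case: ifP => _; rewrite ?oppr_eq0 gt_eqF.
pose f v : 'rV[R]_(m + 2) := sig_v h v *: delta_mx 0 (iota_v v).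
have dotf : forall u v, dot (f u) (f v) = sig_v h u * sig_v h v * (iota_v u == iota_v v)%:R.
  by move=> u v; rewrite /f dotZl dotZr dot_delta mulrA.
have finj : injective f.
  move=> u v fuv.
  have := dotf v u; rewrite -fuv dotf eqxx mulr1.
  have [E|NE] := eqVneq (iota_v v) (iota_v u); last first.
    by rewrite mulr0 -expr2 => /eqP; rewrite expf_eq0 (negbTE (signe u)) andbF.
  rewrite mulr1; clear fuv dotf.
  move: E; case: u => [i|k]; case: v => [i'|k'] /=.
  - by move/lshift_inj => ->.
  - by move/(congr1 val) => /=; have := ltn_ord i; lia.
  - by move/(congr1 val) => /=; have := ltn_ord i'; lia.
  - move/rshift_inj; case: k => [[|[|[|?]]] ?]; case: k' => [[|[|[|?]]] ?] //=;
    try (by move=> _ _; congr inr; apply: val_inj).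
    1,2: by move=> _ H; exfalso; nra.
have ff : forall v, dot (f v - 0) (f v - 0) = 2^-1.
  by move=> v; rewrite subr0 dotf eqxx mulr1 -expr2 sig2.
have edge_ne : forall u v, K_plus_eps3 m u v -> iota_v u != iota_v v.
  move=> [i|k] [i'|k']; rewrite /K_plus_eps3 /join_rel /complete_rel /empty_rel //=.
  - by move=> _; apply/eqP => /(congr1 val) /=; have := ltn_ord i; lia.
  - by move=> _; apply/eqP => /(congr1 val) /=; have := ltn_ord i'; lia.
exists h; split => //; exists f; split; last first.
  by exists 0 => v; rewrite edistE ff Hh.
split; first exact: finj.
split.
  move=> u v /edge_ne /negbTE huv.
  rewrite edistE dot_sub_expand !dotf huv !eqxx !mulr1 mulr0 -!expr2 !sig2.
  have -> : 2^-1 + 2^-1 - 2 * 0 = 1 :> R by field.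
  exact: sqrtr1.
move=> u v w _ wu wv Hs.
have [] := sphere_seg (ff u) (ff v) (ff w) Hs => /finj E.
  by rewrite E eqxx in wu.
by rewrite E eqxx in wv.
Qed.

Lemma lower (R : realType) m j : sph_lt1 R (K_plus_eps3 m) j -> (m + 2 <= j)%N.
Proof.
move=> [r [_ [f [[finj [fedge _]] [c fc]]]]].
pose A v := f v - c.
have AB : forall u v, f u - f v = A u - A v.
  by move=> u v; rewrite /A opprB addrA subrK.
have Ainj : forall u v, A u = A v -> u = v.
  by move=> u v /(congr1 (fun x => x + c)); rewrite /A !subrK => /finj.
set s := r ^+ 2.
have N : forall v, dot (A v) (A v) = s by move=> v; apply: edist_sq.
have Ed : forall u v, K_plus_eps3 m u v -> 2 * dot (A u) (A v) = 2 * s - 1.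
  move=> u v /fedge /edist_sq; rewrite AB dot_sub_expand !N expr1n => H.
  lra.
have k0 : (0 < 3)%N by []. have k1 : (1 < 3)%N by []. have k2 : (2 < 3)%N by [].
have [b1 Hb1] : {b | b = A (inr (Ordinal k0))} by eexists.
have [b2 Hb2] : {b | b = A (inr (Ordinal k1))} by eexists.
have [b3 Hb3] : {b | b = A (inr (Ordinal k2))} by eexists.
pose a i := A (inl i).
have [d Hd] : {x | x = b2 - b1} by eexists.
have [e He] : {x | x = b3 - b1} by eexists.
have Nb1 : dot b1 b1 = s by rewrite Hb1 N.
have Nb2 : dot b2 b2 = s by rewrite Hb2 N.
have Nb3 : dot b3 b3 = s by rewrite Hb3 N.
have ab : forall i (k : 'I_3), 2 * dot (a i) (A (inr k)) = 2 * s - 1 by move=> i k; apply: Ed.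
have aa : forall i i', i != i' -> 2 * dot (a i) (a i') = 2 * s - 1 by move=> i i' H; apply: Ed.
have ad : forall i, dot (a i) d = 0.
  by move=> i; rewrite Hd dotBr Hb1 Hb2; have := ab i (Ordinal k0); have := ab i (Ordinal k1); lra.
have ae : forall i, dot (a i) e = 0.
  by move=> i; rewrite He dotBr Hb1 Hb3; have := ab i (Ordinal k0); have := ab i (Ordinal k2); lra.
have ak : forall i k, dot (a i) (a k - b1) = if i == k then 2^-1 else 0.
  move=> i k; rewrite dotBr; have := ab i (Ordinal k0); rewrite -Hb1.
  case: eqP => [->|/eqP ne]; first by rewrite /a N; lra.
  by have := aa _ _ ne; lra.
pose g (i : 'I_(m + 2)) : 'rV_j :=
  match split i with inl i' => a i' | inr k => if k == ord0 then d else e end.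
pose M := \matrix_(i, l) g i 0 l.
have rowM : forall i, row i M = g i by move=> i; apply/rowP => l; rewrite !mxE.
have free : row_free M.
  rewrite -kermx_eq0; apply/rowV0P => x /sub_kermxP.
  rewrite mulmx_sum_row big_split_ord /= !big_ord_recl big_ord0 addr0 !rowM.
  have gl : forall i, g (lshift 2 i) = a i.
    by move=> i; rewrite /g (unsplitK (inl _ i)).
  have gr : forall k, g (rshift m k) = if k == ord0 then d else e.
    by move=> k; rewrite /g (unsplitK (inr _ k)).
  rewrite !gr /=.
  under eq_bigr => i _ do rewrite rowM gl.
  set p := \sum_(i < m) _.
  set mu := x 0 (rshift m ord0); set nu := x 0 (rshift m (lift ord0 ord0)).
  move=> /eqP; rewrite addr_eq0 => /eqP Hp.
  set q := mu *: d + nu *: e in Hp.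
  have pd : dot p d = 0.
    by rewrite /p dot_suml big1 // => i _; rewrite dotZl ad mulr0.
  have pe : dot p e = 0.
    by rewrite /p dot_suml big1 // => i _; rewrite dotZl ae mulr0.
  have q0 : q = 0.
    apply: dot_eq0; rewrite {1}/q dotDl !dotZl (dotC d) (dotC e) -[q]opprK -Hp.
    by rewrite !dotNl pd pe oppr0 !mulr0 addr0.
  have p0 : p = 0 by rewrite Hp q0 oppr0.
  have nb : forall k k' : 'I_3, k != k' -> A (inr k) - A (inr k') != 0.
    move=> k k' kk; rewrite subr_eq0; apply/eqP => /Ainj [] /eqP.
    by rewrite (negbTE kk).
  have Dp : 0 < dot d d by apply: dot_gt0; rewrite Hd Hb1 Hb2; apply: nb.
  have Ep : 0 < dot e e by apply: dot_gt0; rewrite He Hb1 Hb3; apply: nb.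
  have Fp : 0 < dot (b3 - b2) (b3 - b2) by apply: dot_gt0; rewrite Hb3 Hb2; apply: nb.
  move: Dp Ep Fp; rewrite Hd He !dot_sub_expand Nb1 Nb2 Nb3.
  have eqs : forall w, dot q w = 0 by move=> w; rewrite q0 dot0l.
  have eq1 := eqs b1; have eq2 := eqs d; have eq3 := eqs e.
  rewrite /q Hd He !(dotDl, dotZl, dotBl, dotBr, dotNl) ?Nb1 ?Nb2 ?Nb3 in eq1 eq2 eq3.
  rewrite ?(dotC b1 b2) ?(dotC b1 b3) ?(dotC b2 b3) in eq1 eq2 eq3 *.
  set u12 := dot b2 b1 in eq1 eq2 eq3 *; set u13 := dot b3 b1 in eq1 eq2 eq3 *;
  set u23 := dot b3 b2 in eq1 eq2 eq3 *.
  move=> Dp Ep Fp.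
  have hX : nu * (u23 - u12 + u13 - s) = 0.
    nra.
  have hY : mu * (u23 + u12 - u13 - s) = 0 by nra.
  have [mu0 nu0] : mu = 0 /\ nu = 0.
    have [X0|X0] := eqVneq (u23 - u12 + u13 - s) 0.
      have Y0 : u23 + u12 - u13 - s != 0 by apply/eqP => Y; clear -X0 Y Fp; lra.
      move/eqP: hY; rewrite mulf_eq0 (negbTE Y0) orbF => /eqP mu0.
      split => //; move: eq1; rewrite mu0 mul0r add0r => /eqP.
      by rewrite mulf_eq0 => /orP [/eqP //|/eqP H]; lra.
    move/eqP: hX; rewrite mulf_eq0 (negbTE X0) orbF => /eqP nu0.
    split => //; move: eq1; rewrite nu0 mul0r addr0 => /eqP.
    by rewrite mulf_eq0 => /orP [/eqP //|/eqP H]; lra.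
  have lam : forall k, x 0 (lshift 2 k) = 0.
    move=> k; have := congr1 (fun w => dot w (a k - b1)) p0; rewrite /= dot0l /p dot_suml.
    rewrite (bigD1 k) //= big1 => [|i ik]; last by rewrite dotZl ak (negbTE ik) mulr0.
    rewrite dotZl ak eqxx addr0 => /eqP; rewrite mulf_eq0 invr_eq0 pnatr_eq0 orbF.
    by move/eqP.
  apply/rowP => i; rewrite mxE -(splitK i); case: (split i) => [i'|k] /=; first exact: lam.
  case: k => [[|[|?]] Hk] //.
    by have -> : Ordinal Hk = ord0 by apply: val_inj.
  by have -> : Ordinal Hk = lift ord0 ord0 by apply: val_inj.
by move: free; rewrite /row_free => /eqP <-; apply: rank_leq_col.
Qed.

Local Close Scope ring_scope.

Theorem mainTheorem17 (R : realType) (n : nat) :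
  (4 <= n)%N -> is_sdim R (K_plus_eps3 (n - 3)) (n - 1).
Proof.
move=> n4; split.
  have -> : (n - 1 = (n - 3) + 2)%N by lia.
  exact: upper.
by move=> j hj sj; have := lower sj; lia.
Qed.
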